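(* Any pairwise trivially balanced lobster has a complete $\alpha$-labeling.
   Context: For a graph $G=(V,E)$ with $m$ edges, an $\alpha$-labeling with critical number $k$ is an injective $f:V\to\{0,\ldots,m\}$ with distinct edge labels $|f(u)-f(v)|$ such that every edge $uv$ satisfies $f(u)\le k<f(v)$ or $f(v)\le k<f(u)$; it is complete if $f$ is bijective. A lobster is a tree whose base (delete all degree-one vertices) is a caterpillar (a tree whose base is a path). A lobster $L$ is described by a spine, a path $(v_1,\ldots,v_r)$, and lobes $F_i$ at $v_i$ (pairwise vertex-disjoint trees meeting the spine only in $v_i$, $L$ the union of spine and lobes), each lobe $F_i$ consisting of $v_i$, vertices adjacent to $v_i$, and further leaves attached to those vertices; a neighbour of $v_i$ in $F_i$ with no further leaves is a pendant vertex at $v_i$, and a neighbour $u$ of $v_i$ together with its $\ge1$ further leaves is a non-pendant branch. $L$ is pairwise trivially balanced if $r$ is even and, for each odd $i\in\{1,\ldots,r-1\}$, there are integers $q_i\ge 0$ and $t_i\ge1$ such that each of $F_i$ and $F_{i+1}$ has exactly $q_i$ non-pendant branches, each consisting of a neighbour of the spinal vertex together with exactly $t_i$ further leaves (the numbers of pendant vertices at $v_i$ and $v_{i+1}$ being arbitrary). *)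

(* Defs.v *)
From mathcomp Require Import all_boot.
Set Implicit Arguments. Unset Strict Implicit. Unset Printing Implicit Defensive.

Definition simple_graph (V : finType) (e : rel V) : Prop :=
  symmetric e /\ irreflexive e.

Definition edges (V : finType) (e : rel V) : {set {set V}} :=
  [set [set p.1; p.2] | p in [set p : V * V | e p.1 p.2]].

Definition nedges (V : finType) (e : rel V) : nat := #|edges e|.

Definition absdiff (a b : nat) : nat := (a - b) + (b - a).

Definition alpha_labeling (V : finType) (e : rel V) (f : V -> nat) (k : nat)
  : Prop :=
  injective f /\
  (forall x, f x <= nedges e) /\
  (forall x y x' y', e x y -> e x' y' ->
     absdiff (f x) (f y) = absdiff (f x') (f y') ->
     [set x; y] = [set x'; y']) /\
  (forall x y, e x y -> (f x <= k < f y) \/ (f y <= k < f x)).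

Definition complete_alpha_labeling (V : finType) (e : rel V) (f : V -> nat)
  (k : nat) : Prop :=
  alpha_labeling e f k /\ (forall n, n <= nedges e -> exists x, f x = n).

Definition has_complete_alpha_labeling (V : finType) (e : rel V) : Prop :=
  exists (f : V -> nat) (k : nat), complete_alpha_labeling e f k.

(* A lobster description of (V,e), with spine (v 0, ..., v (r-1)) (0-based
   indices) and lobes F_0, ..., F_(r-1):
   - lobe x  : index i of the lobe F_i containing x (lobes partition V);
   - level x : 0 for the spinal vertex v i, 1 for a neighbour of v i in F_i,
               2 for a further leaf attached to a level-1 vertex;
   - par x   : for level x > 0, the vertex of F_i that x hangs from. *)
Definition lobster_description (V : finType) (e : rel V) (r : nat)
  (v : nat -> V) (lobe : V -> nat) (level : V -> nat) (par : V -> V) : Prop :=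
  0 < r /\
  [/\ (forall i j, i < r -> j < r -> v i = v j -> i = j),
      (forall i, i < r -> lobe (v i) = i /\ level (v i) = 0),
      (forall x, [/\ lobe x < r, (level x <= 2) &
                     (level x = 0 -> x = v (lobe x))]),
      (forall x, 0 < level x ->
                 level (par x) = (level x).-1 /\ lobe (par x) = lobe x) &
      (forall x y, e x y <->
         [\/ (exists2 i, i.+1 < r & [set x; y] = [set v i; v i.+1]),
             0 < level x /\ par x = y |
             0 < level y /\ par y = x])].

Definition nchildren (V : finType) (level : V -> nat) (par : V -> V) (x : V)
  : nat := #|[set y | (level y == 2) && (par y == x)]|.

(* pairwise trivially balanced: r even and for each pair of lobes
   (F_i, F_(i+1)) with i even (0-based; odd in the paper's 1-based indexing)
   there are q >= 0 and t >= 1 such that each of F_i, F_(i+1) has exactly q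
   non-pendant branches (level-1 vertices with >= 1 further leaf), each
   having exactly t further leaves. *)
Definition pairwise_trivially_balanced (V : finType) (r : nat)
  (lobe : V -> nat) (level : V -> nat) (par : V -> V) : Prop :=
  ~~ odd r /\
  forall i, i.+1 < r -> ~~ odd i ->
    exists q t, 1 <= t /\
      forall j, (j = i \/ j = i.+1) ->
        #|[set x | [&& lobe x == j, level x == 1 & 0 < nchildren level par x]]|
          = q /\
        (forall x, lobe x = j -> level x = 1 -> 0 < nchildren level par x ->
                   nchildren level par x = t).

Definition pairwise_trivially_balanced_lobster (V : finType) (e : rel V)
  : Prop :=
  simple_graph e /\
  exists r v lobe level par,
    lobster_description e r v lobe level par /\
    pairwise_trivially_balanced r lobe level par.

(* Main.v *)
Require Import Defs.
From mathcomp Require Import all_boot zify.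
Set Implicit Arguments. Unset Strict Implicit. Unset Printing Implicit Defensive.
Lemma divmod_uniq (T a b a' b' : nat) : b < T -> b' < T -> a * T + b = a' * T + b' -> a = a' /\ b = b'.
Proof.
move=> hb hb' E.
have h1 : (a * T + b) %/ T = a. by rewrite divnMDl ?divn_small ?addn0 //; lia.
have h2 : (a' * T + b') %/ T = a'. by rewrite divnMDl ?divn_small ?addn0 //; lia.
have ha : a = a' by rewrite -h1 -h2 E.
split=> //; subst a'; lia.
Qed.
Lemma divmod_ex (n T : nat) : 0 < T -> exists a b, b < T /\ n = a * T + b.
Proof. move=> hT; exists (n %/ T), (n %% T); split; [exact: ltn_pmod | exact: divn_eq]. Qed.

Inductive vc := VA | VB | Vp of nat | VP of nat | Vu of nat | VU of nat | Vl of nat & nat | VL of nat & nat.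
Definition vside (c : vc) : bool :=
  match c with VA | VP _ | VU _ | Vl _ _ => true | _ => false end.
Definition vval (P q t : nat) (c : vc) : nat :=
  let T := t.+1 in
  match c with
  | VA => 0 | Vl c l => 1 + c * T + l | VU c => c.+1 * T | VP p => 1 + q * T + p
  | Vp p => p | Vu c => P + c * T | VL c l => P + c * T + 1 + l | VB => P + q * T
  end.
Definition vvalid (P P' q t : nat) (c : vc) : bool :=
  match c with
  | VA | VB => true
  | Vp p => p < P | VP p => p < P'
  | Vu c | VU c => c < q
  | Vl c l | VL c l => (c < q) && (l < t)
  end.
Definition al (P' q t : nat) := 1 + q * t.+1 + P'.
Definition be (P q t : nat) := P + q * t.+1 + 1.

Lemma vval_lt P P' q t c : vvalid P P' q t c ->
  vval P q t c < (if vside c then al P' q t else be P q t).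
Proof. rewrite /al /be; case: c => /= [||p|p|c|c|c l|c l] H; try (move: H => /andP[? ?]); nia. Qed.

Definition vQ (q : nat) (c : vc) := match c with
  | VA => 0 | Vl c _ => c | VU c => c.+1 | Vu c => c | VL c _ => c | VB => q | _ => 0 end.
Definition vR (c : vc) := match c with Vl _ l | VL _ l => l.+1 | _ => 0 end.
Definition vmid c := match c with Vp _ | VP _ => false | _ => true end.

Lemma vval_mid P q t c : vmid c ->
  vval P q t c = (if vside c then 0 else P) + vQ q c * t.+1 + vR c.
Proof. by case: c => //= *; nia. Qed.

Lemma vval_inj P P' q t c c' : vside c = vside c' -> vvalid P P' q t c -> vvalid P P' q t c' ->
  vval P q t c = vval P q t c' -> c = c'.
Proof.
move=> S H1 H2 E.
case M1: (vmid c); case M2: (vmid c').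
- move: E; rewrite !vval_mid // S => E.
  have [EQ ER] : vQ q c = vQ q c' /\ vR c = vR c'.
    apply: (@divmod_uniq t.+1); last by lia.
    - by case: c H1 {M1 E S} => //= [a l|a l] /andP[_ ?]; lia.
    - by case: c' H2 {M2 E S} => //= [a l|a l] /andP[_ ?]; lia.
  by case: c H1 M1 EQ ER S {E}; case: c' H2 M2 => //= *; (try (exfalso; lia)); f_equal; lia.
all: case: c S H1 M1 E; case: c' H2 M2 => //= *; (try (exfalso; nia)); f_equal; lia.
Qed.

Lemma vval_surj P P' q t (b : bool) n : n < (if b then al P' q t else be P q t) ->
  exists c, [/\ vside c = b, vvalid P P' q t c & vval P q t c = n].
Proof.
rewrite /al /be; case: b => hn.
- case: (posnP n) => [->|n0]; first by exists VA.
  case: (leqP n (q * t.+1)) => hq.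
    have [a [b [hb E]]] := @divmod_ex n.-1 t.+1 (ltn0Sn t).
    case: (ltnP b t) => hbt.
      exists (Vl a b); split=> //=; last by lia.
      apply/andP; split=> //; nia.
    exists (VU a); split=> //=; [nia | nia].
  exists (VP (n - 1 - q * t.+1)); split=> //=; lia.
- case: (ltnP n P) => hP; first by exists (Vp n).
  case: (ltnP (n - P) (q * t.+1)) => hq.
    have [a [b [hb E]]] := @divmod_ex (n - P) t.+1 (ltn0Sn t).
    case: (posnP b) => b0.
      exists (Vu a); split=> //=; [nia | nia].
    exists (VL a b.-1); split=> //=; last by lia.
    apply/andP; split; nia.
  exists VB; split=> //=; lia.
Qed.

Inductive code := K1 | K2 | K3 of nat | K4 of nat | K5 of nat & nat | K6 of nat & nat | K7 of nat | K8 of nat.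
Definition cval (P P' q t : nat) (k : code) : nat :=
  let T := t.+1 in
  match k with
  | K1 => P + q * T
  | K2 => P + P' + q * T + q * T + 1
  | K3 p => p
  | K4 c => P + c * T
  | K5 c l => P + c * T + c * T + 1 + l
  | K6 c l => P + c * T + c * T + T + 1 + l
  | K7 c => P + q * T + c * T + T
  | K8 p => P + q * T + q * T + 1 + p
  end.
Definition cvalid (P P' q t : nat) (k : code) : bool :=
  match k with
  | K1 | K2 => true
  | K3 p => p < P
  | K4 c | K7 c => c < q
  | K5 c l | K6 c l => (c < q) && (l < t)
  | K8 p => p < P'
  end.
Definition cQ q k := match k with K1 => q | K4 c => c | K5 c l => c.*2 | K6 c l => c.*2.+1 | K7 c => q + c + 1 | _ => 0 end.
Definition cR k := match k with K5 _ l | K6 _ l => l.+1 | _ => 0 end.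
Definition cmid k := match k with K1|K4 _|K5 _ _|K6 _ _|K7 _ => true | _ => false end.
Lemma cval_mid P P' q t k : cmid k -> cval P P' q t k = P + cQ q k * t.+1 + cR k.
Proof. by case: k => //= *; nia. Qed.
Lemma cval_inj P P' q t k k' : cvalid P P' q t k -> cvalid P P' q t k' ->
  cval P P' q t k = cval P P' q t k' -> k = k'.
Proof.
move=> H1 H2 E.
case M1: (cmid k); case M2: (cmid k').
- move: E; rewrite !cval_mid // => E.
  have [EQ ER] : cQ q k = cQ q k' /\ cR k = cR k'.
    apply: (@divmod_uniq t.+1); last by lia.
    - by case: k H1 {M1 E} => //= [a l|a l] /andP[_ ?]; lia.
    - by case: k' H2 {M2 E} => //= [a l|a l] /andP[_ ?]; lia.
  by case: k H1 M1 EQ ER {E}; case: k' H2 M2 => //= *; (try (exfalso; lia)); f_equal; lia.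
all: case: k H1 M1 E; case: k' H2 M2 => //= *; (try (exfalso; nia)); f_equal; lia.
Qed.
Lemma cval_lt P P' q t k : cvalid P P' q t k -> cval P P' q t k < al P' q t + be P q t.
Proof. rewrite /al /be; case: k => /= [||p|c|c l|c l|c|p] H; try (move: H => /andP[? ?]); nia. Qed.

Definition epair (k : code) : vc * vc :=
  match k with K1 | K2 => (VA, VB) | K3 p => (VA, Vp p) | K4 c => (VA, Vu c)
  | K5 c l => (Vl c l, Vu c) | K6 c l => (VU c, VL c l) | K7 c => (VU c, VB) | K8 p => (VP p, VB) end.
Lemma cval_epair P P' q t k : k <> K2 ->
  cval P P' q t k = vval P q t (epair k).1 + vval P q t (epair k).2.
Proof. by case: k => //= *; nia. Qed.
Lemma cval_K2 P P' q t : cval P P' q t K2 = al P' q t + vval P q t VB.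
Proof. rewrite /al /=; lia. Qed.
Lemma cvalid_epair P P' q t k :
  vvalid P P' q t (epair k).1 -> vvalid P P' q t (epair k).2 -> cvalid P P' q t k.
Proof. by case: k => //= *; rewrite ?andbT. Qed.
Section Rk.
Variable V : finType.
Definition vrk (S : {set V}) (x : V) : nat := #|[set y : V | (y \in S) && (enum_rank y < enum_rank x)]|.
Lemma rk_lt (S : {set V}) x : x \in S -> vrk S x < #|S|.
Proof.
move=> xS; apply: proper_card; apply/properP; split.
  by apply/subsetP => y; rewrite inE => /andP[].
by exists x => //; rewrite inE ltnn andbF.
Qed.
Lemma rk_lt2 (S : {set V}) x y : x \in S -> enum_rank x < enum_rank y -> vrk S x < vrk S y.
Proof.
move=> xS lt; apply: proper_card; apply/properP; split.
  apply/subsetP => z; rewrite !inE => /andP[-> /= h]; exact: ltn_trans h lt.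
by exists x; rewrite inE ?xS ?lt // ltnn andbF.
Qed.
Lemma rk_inj (S : {set V}) x y : x \in S -> y \in S -> vrk S x = vrk S y -> x = y.
Proof.
move=> xS yS E; apply: enum_rank_inj; apply: val_inj => /=.
case: (ltngtP (enum_rank x) (enum_rank y)) => // h.
- by have := @rk_lt2 S x y xS h; rewrite E ltnn.
- by have := @rk_lt2 S y x yS h; rewrite E ltnn.
Qed.
Lemma rk_surj (S : {set V}) n : n < #|S| -> exists2 x, x \in S & vrk S x = n.
Proof.
move=> hn.
have U : uniq (map (vrk S) (enum S)).
  rewrite map_inj_in_uniq ?enum_uniq // => x y; rewrite !mem_enum; exact: rk_inj.
have Sub : {subset map (vrk S) (enum S) <= iota 0 #|S|}.
  by move=> m /mapP[x]; rewrite mem_enum => xS ->; rewrite mem_iota add0n rk_lt.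
have L : size (iota 0 #|S|) <= size (map (vrk S) (enum S)) by rewrite size_iota size_map -cardE.
have [_ E] := uniq_min_size U Sub L.
have : n \in iota 0 #|S| by rewrite mem_iota.
by rewrite -E => /mapP[x]; rewrite mem_enum => xS ->; exists x.
Qed.
End Rk.

Unset Implicit Arguments.
Section Lob.
Variables (V : finType) (e : rel V) (r : nat) (v : nat -> V) (lobe level : V -> nat) (par : V -> V).
Hypothesis Hr : 0 < r.
Hypothesis Hvinj : forall i j, i < r -> j < r -> v i = v j -> i = j.
Hypothesis Hv : forall i, i < r -> lobe (v i) = i /\ level (v i) = 0.
Hypothesis Hx : forall x, [/\ lobe x < r, level x <= 2 & (level x = 0 -> x = v (lobe x))].
Hypothesis Hpar : forall x, 0 < level x -> level (par x) = (level x).-1 /\ lobe (par x) = lobe x.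
Hypothesis He : forall x y, e x y <->
         [\/ (exists2 i, i.+1 < r & [set x; y] = [set v i; v i.+1]),
             0 < level x /\ par x = y |
             0 < level y /\ par y = x].
Hypothesis Hsym : symmetric e.
Hypothesis Hirr : irreflexive e.
Hypothesis Hev : ~~ odd r.

Definition nch x := nchildren level par x.
Definition chs u := [set y | (level y == 2) && (par y == u)].
Definition br j := [set x | [&& lobe x == j, level x == 1 & 0 < nch x]].
Definition pd j := [set x | [&& lobe x == j, level x == 1 & nch x == 0]].

Hypothesis Hbal : forall i, i.+1 < r -> ~~ odd i ->
    exists q t, 1 <= t /\
      forall j, (j = i \/ j = i.+1) ->
        #|br j| = q /\
        (forall x, lobe x = j -> level x = 1 -> 0 < nch x -> nch x = t).

Definition R := r./2.
Definition qq s := #|br s.*2|.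
Definition tt s := \max_(x in br s.*2) nch x.
Definition PP s := #|pd s.*2|.
Definition PP' s := #|pd s.*2.+1|.
Definition blk x := (lobe x)./2.
Definition sA x := ~~ odd (level x + lobe x).
Definition vcode x : vc :=
  let j := lobe x in
  match level x with
  | 0 => if odd j then VB else VA
  | 1 => if odd j then (if 0 < nch x then VU (vrk (br j) x) else VP (vrk (pd j) x))
         else (if 0 < nch x then Vu (vrk (br j) x) else Vp (vrk (pd j) x))
  | _ => if odd j then VL (vrk (br j) (par x)) (vrk (chs (par x)) x)
         else Vl (vrk (br j) (par x)) (vrk (chs (par x)) x)
  end.
Fixpoint OA s := if s is s'.+1 then OA s' + al (PP' s') (qq s') (tt s') else 0.
Fixpoint OB s := if s is s'.+1 then OB s' + be (PP s') (qq s') (tt s') else 0.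
Definition h x := (if sA x then OA (blk x) else OB (blk x))
   + vval (PP (blk x)) (qq (blk x)) (tt (blk x)) (vcode x).

Set Implicit Arguments.
Lemma blk_lt x : blk x < R.
Proof. case: (Hx x) => hl _ _; rewrite /blk /R; lia. Qed.
Lemma lobe_blk x : lobe x = (blk x).*2 + odd (lobe x).
Proof. rewrite /blk; lia. Qed.
Lemma lev_le x : level x <= 2.
Proof. by case: (Hx x). Qed.

Lemma nch_card u : nch u = #|chs u|.
Proof. by []. Qed.

Lemma par1 x : level x = 1 -> par x = v (lobe x).
Proof.
move=> hl; have := Hpar x; rewrite hl => /(_ isT) [] /= l0 lo.
by case: (Hx (par x)) => _ _ /(_ l0); rewrite lo.
Qed.
Lemma par2 x : level x = 2 -> par x \in br (lobe x) /\ x \in chs (par x).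
Proof.
move=> hl; have := Hpar x; rewrite hl => /(_ isT) [] /= l1 lo.
have xc : x \in chs (par x) by rewrite /chs inE hl !eqxx.
split=> //; rewrite /br inE lo l1 !eqxx /= nch_card card_gt0; apply/set0Pn; by exists x.
Qed.
Lemma brE j x : (x \in br j) = [&& lobe x == j, level x == 1 & 0 < nch x].
Proof. by rewrite inE. Qed.
Lemma pdE j x : (x \in pd j) = [&& lobe x == j, level x == 1 & nch x == 0].
Proof. by rewrite inE. Qed.

Lemma even2 s : ~~ odd s.*2.
Proof. by rewrite odd_double. Qed.
Lemma sR s : s < R -> s.*2.+1 < r.
Proof. rewrite /R; lia. Qed.

Lemma bal_q s : s < R -> #|br s.*2.+1| = qq s.
Proof.
move=> hs; have [q [t [_ H]]] := Hbal s.*2 (sR hs) (even2 s).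
by rewrite /qq (proj1 (H _ (or_introl erefl))) (proj1 (H _ (or_intror erefl))).
Qed.
Lemma bal_t s x : s < R -> x \in br s.*2 \/ x \in br s.*2.+1 -> nch x = tt s.
Proof.
move=> hs hx; have [q [t [_ H]]] := Hbal s.*2 (sR hs) (even2 s).
have Ht : forall y, y \in br s.*2 \/ y \in br s.*2.+1 -> nch y = t.
  move=> y [] /[!brE] /and3P[/eqP lo /eqP l1 n0].
  - exact: (proj2 (H _ (or_introl erefl))).
  - exact: (proj2 (H _ (or_intror erefl))).
rewrite (Ht x hx).
have ne : 0 < #|br s.*2|.
  case: hx => hx; first by rewrite card_gt0; apply/set0Pn; exists x.
  rewrite (proj1 (H _ (or_introl erefl))) -(proj1 (H _ (or_intror erefl))).
  by rewrite card_gt0; apply/set0Pn; exists x.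
rewrite /tt; have [y yin ->] := eq_bigmax_cond nch ne.
by rewrite (Ht y (or_introl yin)).
Qed.

Lemma in_br x : level x = 1 -> 0 < nch x -> x \in br (lobe x).
Proof. by move=> l1 n0; rewrite brE eqxx l1 n0. Qed.
Lemma in_pd x : level x = 1 -> ~~ (0 < nch x) -> x \in pd (lobe x).
Proof. by move=> l1; rewrite pdE eqxx l1 lt0n negbK. Qed.

Lemma lobe_even x : odd (lobe x) = false -> lobe x = (blk x).*2.
Proof. move=> O; have := lobe_blk x; rewrite O addn0 //. Qed.
Lemma lobe_odd x : odd (lobe x) = true -> lobe x = (blk x).*2.+1.
Proof. move=> O; have := lobe_blk x; rewrite O addn1 //. Qed.

Lemma sA_vcode x : vside (vcode x) = sA x.
Proof.
rewrite /vcode /sA; have := lev_le x.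
case: (level x) => [|[|[|n]]] // _; rewrite ?add0n ?add1n ?add2n /=;
  case: (odd (lobe x)) => //=; case: (0 < nch x) => //.
Qed.

Lemma vcode_valid x : vvalid (PP (blk x)) (PP' (blk x)) (qq (blk x)) (tt (blk x)) (vcode x).
Proof.
have hs := blk_lt x; rewrite /vcode.
case L: (level x) (lev_le x) => [|[|[|n]]] // _.
- by case: (odd (lobe x)).
- case O: (odd (lobe x)) => /=.
  + have Elo := lobe_odd O.
    case N: (0 < nch x) => /=.
    * rewrite -(bal_q hs) -Elo; exact: rk_lt (in_br L N).
    * rewrite /PP' -Elo; apply: rk_lt; apply: in_pd => //; by rewrite N.
  + have Elo := lobe_even O.
    case N: (0 < nch x) => /=.
    * rewrite /qq -Elo; exact: rk_lt (in_br L N).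
    * rewrite /PP -Elo; apply: rk_lt; apply: in_pd => //; by rewrite N.
- have [pb xc] := par2 L.
  have Ht : nch (par x) = tt (blk x).
    apply: bal_t => //; case O: (odd (lobe x)); [right; rewrite -(lobe_odd O) | left; rewrite -(lobe_even O)] => //.
  have T1 : vrk (chs (par x)) x < tt (blk x) by rewrite -Ht nch_card; exact: rk_lt.
  case O: (odd (lobe x)) => /=; apply/andP; split=> //.
  + rewrite -(bal_q hs) -(lobe_odd O); exact: rk_lt.
  + rewrite /qq -(lobe_even O); exact: rk_lt.
Qed.

Definition vlev c := match c with VA | VB => 0 | Vl _ _ | VL _ _ => 2 | _ => 1 end.
Definition vodd c := match c with VB | VP _ | VU _ | VL _ _ => true | _ => false end.

Lemma vcode_lev x : level x = vlev (vcode x).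
Proof.
rewrite /vcode; case L: (level x) (lev_le x) => [|[|[|n]]] // _;
  case: (odd (lobe x)) => //=; case: (0 < nch x) => //.
Qed.
Lemma vcode_odd x : odd (lobe x) = vodd (vcode x).
Proof.
rewrite /vcode; case L: (level x) (lev_le x) => [|[|[|n]]] // _;
  case: (odd (lobe x)) => //=; case: (0 < nch x) => //.
Qed.

Lemma vcode_inj x y : blk x = blk y -> vcode x = vcode y -> x = y.
Proof.
move=> B E.
have El : lobe x = lobe y by rewrite (lobe_blk x) (lobe_blk y) B !vcode_odd E.
have Lv : level x = level y by rewrite !vcode_lev E.
move: E; rewrite /vcode -El -Lv.
case L: (level x) (lev_le x) => [|[|[|n]]] // _.
- move=> _; case: (Hx x) => _ _ /(_ L) ->; case: (Hx y) => _ _ /(_ (etrans (esym Lv) L)) ->.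
  by rewrite El.
- have Ly : level y = 1 by rewrite -Lv.
  case O: (odd (lobe x)); case nx: (0 < nch x); case ny: (0 < nch y) => //= E; try discriminate E; case: E => E.
  + apply: rk_inj E; [exact: in_br L nx | rewrite El; exact: in_br Ly ny].
  + apply: rk_inj E; [apply: in_pd => //; by rewrite nx | rewrite El; apply: in_pd => //; by rewrite ny].
  + apply: rk_inj E; [exact: in_br L nx | rewrite El; exact: in_br Ly ny].
  + apply: rk_inj E; [apply: in_pd => //; by rewrite nx | rewrite El; apply: in_pd => //; by rewrite ny].
- have Ly : level y = 2 by rewrite -Lv.
  have [px xc] := par2 L; have [py yc] := par2 Ly.
  have H : forall a b, VL a b = VL (vrk (br (lobe x)) (par y)) (vrk (chs (par y)) y) \/
                       Vl a b = Vl (vrk (br (lobe x)) (par y)) (vrk (chs (par y)) y) ->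
           a = vrk (br (lobe x)) (par y) /\ b = vrk (chs (par y)) y by move=> a b [] [-> ->].
  move=> E; have [E1 E2] : vrk (br (lobe x)) (par x) = vrk (br (lobe x)) (par y) /\
                          vrk (chs (par x)) x = vrk (chs (par y)) y.
    by apply: H; case: (odd (lobe x)) E => E; [left | right].
  have Pe : par x = par y by apply: rk_inj E1 => //; rewrite El.
  by rewrite -Pe in E2 yc; apply: rk_inj E2.
Qed.

Lemma blk_of x s : lobe x = s.*2 \/ lobe x = s.*2.+1 -> blk x = s.
Proof. rewrite /blk; case=> ->; lia. Qed.
Lemma odd2S s : odd s.*2.+1 = true.
Proof. by rewrite /= odd_double. Qed.

Lemma vcode_real s c : s < R -> vvalid (PP s) (PP' s) (qq s) (tt s) c ->
  exists x, blk x = s /\ vcode x = c.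
Proof.
move=> hs; have hr := sR hs; have hr0 : s.*2 < r by lia.
case: c => [||p|p|c|c|c l|c l] /=.
- move=> _; exists (v s.*2); have [Lo Le] := Hv _ hr0.
  split; first by apply: blk_of; left.
  by rewrite /vcode Le Lo odd_double.
- move=> _; exists (v s.*2.+1); have [Lo Le] := Hv _ hr.
  split; first by apply: blk_of; right.
  by rewrite /vcode Le Lo odd2S.
- rewrite /PP => /rk_surj [x]; rewrite pdE => /and3P[/eqP Lo /eqP Le /eqP N] E.
  exists x; split; first by apply: blk_of; left.
  by rewrite /vcode Le Lo odd_double N /= E.
- rewrite /PP' => /rk_surj [x]; rewrite pdE => /and3P[/eqP Lo /eqP Le /eqP N] E.
  exists x; split; first by apply: blk_of; right.
  by rewrite /vcode Le Lo odd2S N /= E.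
- rewrite /qq => /rk_surj [x]; rewrite brE => /and3P[/eqP Lo /eqP Le N] E.
  exists x; split; first by apply: blk_of; left.
  by rewrite /vcode Le Lo odd_double N /= E.
- rewrite -(bal_q hs) => /rk_surj [x]; rewrite brE => /and3P[/eqP Lo /eqP Le N] E.
  exists x; split; first by apply: blk_of; right.
  by rewrite /vcode Le Lo odd2S N /= E.
- case/andP; rewrite /qq => /rk_surj [u ub Eu].
  have := ub; rewrite brE => /and3P[/eqP Lo /eqP Le N].
  rewrite -(bal_t hs (or_introl ub)) nch_card => /rk_surj [x xc Ex].
  move: xc; rewrite /chs inE => /andP[/eqP Lx /eqP Px].
  have Lox : lobe x = s.*2 by move: (Hpar x); rewrite Lx => /(_ isT) [_ <-]; rewrite Px.
  exists x; split; first by apply: blk_of; left.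
  by rewrite /vcode Lx Lox odd_double Px Eu Ex.
- case/andP; rewrite -(bal_q hs) => /rk_surj [u ub Eu].
  have := ub; rewrite brE => /and3P[/eqP Lo /eqP Le N].
  rewrite -(bal_t hs (or_intror ub)) nch_card => /rk_surj [x xc Ex].
  move: xc; rewrite /chs inE => /andP[/eqP Lx /eqP Px].
  have Lox : lobe x = s.*2.+1 by move: (Hpar x); rewrite Lx => /(_ isT) [_ <-]; rewrite Px.
  exists x; split; first by apply: blk_of; right.
  by rewrite /vcode Lx Lox odd2S Px Eu Ex.
Qed.

Lemma interval_uniq (F : nat -> nat) : (forall s, F s <= F s.+1) ->
  forall s s' n, F s <= n < F s.+1 -> F s' <= n < F s'.+1 -> s = s'.
Proof.
move=> Hm.
have mono : forall a b, a <= b -> F a <= F b.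
  move=> a b /subnK <-; elim: (b - a) => [|k IH] //; rewrite addSn; exact: leq_trans IH (Hm _).
move=> s s' n /andP[h1 h2] /andP[h3 h4].
case: (ltngtP s s') => // lt.
- have := mono _ _ lt; lia.
- have := mono _ _ lt; lia.
Qed.
Lemma interval_ex (F : nat -> nat) : F 0 = 0 ->
  forall N n, n < F N -> exists s, s < N /\ F s <= n < F s.+1.
Proof.
move=> F0; elim=> [|N IH] n; first by rewrite F0.
case: (ltnP n (F N)) => h1 h2.
- by have [s [hs H]] := IH n h1; exists s; split=> //; exact: ltnW.
- by exists N; rewrite h1 h2.
Qed.

Lemma OA_mono s : OA s <= OA s.+1.
Proof. by rewrite /= leq_addr. Qed.
Lemma OB_mono s : OB s <= OB s.+1.
Proof. by rewrite /= leq_addr. Qed.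
Lemma OA_le a b : a <= b -> OA a <= OA b.
Proof. move=> /subnK <-; elim: (b - a) => [|k IH] //; rewrite addSn; exact: leq_trans IH (OA_mono _). Qed.
Lemma OB_le a b : a <= b -> OB a <= OB b.
Proof. move=> /subnK <-; elim: (b - a) => [|k IH] //; rewrite addSn; exact: leq_trans IH (OB_mono _). Qed.

Definition NA := OA R.
Definition NB := OB R.

Lemma h_int x : (if sA x then OA (blk x) <= h x < OA (blk x).+1 else OB (blk x) <= h x < OB (blk x).+1).
Proof.
have := vval_lt (vcode_valid x); rewrite sA_vcode /h /=.
by case: (sA x) => H; rewrite leq_addr /= ltn_add2l.
Qed.

Lemma h_lt x : h x < (if sA x then NA else NB).
Proof.
have := h_int x; have hb := blk_lt x; rewrite /NA /NB.
case: (sA x) => /andP[_ H].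
- exact: leq_trans H (OA_le hb).
- exact: leq_trans H (OB_le hb).
Qed.

Lemma h_inj x y : sA x = sA y -> h x = h y -> x = y.
Proof.
move=> S E.
have B : blk x = blk y.
  have := h_int x; have := h_int y; rewrite -S E.
  case: (sA x) => H1 H2.
  - exact: interval_uniq OA_mono _ _ _ H2 H1.
  - exact: interval_uniq OB_mono _ _ _ H2 H1.
apply: vcode_inj => //.
move: E; rewrite /h -S B => /addnI E.
have V1 := vcode_valid x; rewrite B in V1.
exact: vval_inj (etrans (sA_vcode x) (etrans S (esym (sA_vcode y)))) V1 (vcode_valid y) E.
Qed.

Lemma h_surj (b : bool) n : n < (if b then NA else NB) -> exists x, sA x = b /\ h x = n.
Proof.
rewrite /NA /NB => hn.
have [s [hs /andP[h1 h2]]] : exists s, s < R /\ (if b then OA s else OB s) <= n < (if b then OA s.+1 else OB s.+1).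
  case: b hn => hn; [have [s [hs H]] := interval_ex (F:=OA) erefl hn
                   | have [s [hs H]] := interval_ex (F:=OB) erefl hn]; by exists s.
have : n - (if b then OA s else OB s) < (if b then al (PP' s) (qq s) (tt s) else be (PP s) (qq s) (tt s)).
  by case: b h1 h2 {hn} => /= h1 h2; lia.
case/vval_surj => c [Sc Vc Ec].
have [x [Bx Cx]] := vcode_real hs Vc.
exists x; have Sx : sA x = b by rewrite -sA_vcode Cx.
split=> //; rewrite /h Sx Bx Cx Ec; lia.
Qed.

Lemma vsp j : j < r -> [/\ sA (v j) = ~~ odd j, vcode (v j) = (if odd j then VB else VA) & blk (v j) = j./2].
Proof. move=> hj; have [Lo Le] := Hv _ hj; by rewrite /sA /vcode /blk Le Lo add0n. Qed.

Lemma edge_class a b : e a b -> sA a -> ~~ sA b ->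
  exists K, (vcode a, vcode b) = epair K /\ blk a = (if K is K2 then (blk b).+1 else blk b).
Proof.
move=> /He [[i hi E]|[la pa]|[lb pb]] Sa Sb.
- have hi0 : i < r by lia.
  have Ha : a = v i \/ a = v i.+1 by apply/set2P; rewrite -E set21.
  have Hb : b = v i \/ b = v i.+1 by apply/set2P; rewrite -E set22.
  have [S1 C1 B1] := vsp hi0; have [S2 C2 B2] := vsp hi.
  case: Ha => Ea; case: Hb => Eb; subst a b.
  + by rewrite Sa in Sb.
  + exists K1; rewrite C1 C2 B1 B2 /=; move: Sa; rewrite S1 => /negbTE O.
    by rewrite O; split=> //; lia.
  + exists K2; rewrite C1 C2 B1 B2 /=; move: Sa; rewrite S2 /= negbK => O.
    by rewrite O; split=> //; lia.
  + by rewrite Sa in Sb.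
- subst b.
  case L: (level a) (lev_le a) la => [|[|[|n]]] // _ _.
  + have P1 := par1 L.
    have O : odd (lobe a) by move: Sa; rewrite /sA L add1n /= negbK.
    have lr : lobe a < r by case: (Hx a).
    have [_ C _] := vsp lr.
    have Bp : blk (par a) = blk a by rewrite P1 /blk (proj1 (Hv _ lr)).
    rewrite Bp P1 C O /vcode L O.
    by case: (0 < nch a); [exists (K7 (vrk (br (lobe a)) a)) | exists (K8 (vrk (pd (lobe a)) a))].
  + have [pb _] := par2 L; move: (pb); rewrite brE => /and3P[/eqP Lp /eqP Lb Np].
    have O : odd (lobe a) = false by move: Sa; rewrite /sA L add2n /= negbK => /negbTE.
    exists (K5 (vrk (br (lobe a)) (par a)) (vrk (chs (par a)) a)).
    rewrite /vcode L Lb Lp O Np /= /blk Lp; split=> //.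
- subst a.
  case L: (level b) (lev_le b) lb => [|[|[|n]]] // _ _.
  + have P1 := par1 L.
    have O : odd (lobe b) = false by move: Sb; rewrite /sA L add1n /= negbK => /negbTE.
    have lr : lobe b < r by case: (Hx b).
    have [_ C _] := vsp lr.
    have Bp : blk (par b) = blk b by rewrite P1 /blk (proj1 (Hv _ lr)).
    rewrite Bp P1 C O /vcode L O.
    by case: (0 < nch b); [exists (K4 (vrk (br (lobe b)) b)) | exists (K3 (vrk (pd (lobe b)) b))].
  + have [pb _] := par2 L; move: (pb); rewrite brE => /and3P[/eqP Lp /eqP Lb Np].
    have O : odd (lobe b) by move: Sb; rewrite /sA L add2n /= !negbK.
    exists (K6 (vrk (br (lobe b)) (par b)) (vrk (chs (par b)) b)).
    rewrite /vcode L Lb Lp O Np /= /blk Lp; split=> //.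
Qed.

Definition prm s := (PP s, PP' s, qq s, tt s).

Lemma edge_sum a b : e a b -> sA a -> ~~ sA b ->
  exists K, [/\ cvalid (PP (blk b)) (PP' (blk b)) (qq (blk b)) (tt (blk b)) K,
     h a + h b = OA (blk b) + OB (blk b) + cval (PP (blk b)) (PP' (blk b)) (qq (blk b)) (tt (blk b)) K,
     (vcode a, vcode b) = epair K &
     blk a = (if K is K2 then (blk b).+1 else blk b)].
Proof.
move=> eab Sa Sb; have [K [Ep Bl]] := edge_class eab Sa Sb.
exists K; split=> //.
- have nKv : forall K0, (vcode a, vcode b) = epair K0 -> blk a = blk b ->
     cvalid (PP (blk b)) (PP' (blk b)) (qq (blk b)) (tt (blk b)) K0.
    move=> K0 E0 B0; apply: cvalid_epair; rewrite -E0 /=; first [exact: vcode_valid | rewrite -B0; exact: vcode_valid].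
  by case: K Ep Bl => [||p|c|c l|c l|c|p] Ep Bl //; apply: (nKv _ Ep).
- rewrite /h Sa (negbTE Sb).
  case KE: K Ep Bl => [||p|c|c l|c l|c|p] [Ea Eb] Bl;
   rewrite ?Bl Ea Eb; first [rewrite cval_K2 /=; lia | rewrite cval_epair //=; lia].
Qed.

Lemma edge_inj a b a' b' : e a b -> sA a -> ~~ sA b -> e a' b' -> sA a' -> ~~ sA b' ->
  h a + h b = h a' + h b' -> a = a' /\ b = b'.
Proof.
move=> e1 S1 S1' e2 S2 S2' E.
have [K [V1 E1 C1 B1]] := edge_sum e1 S1 S1'.
have [K' [V2 E2 C2 B2]] := edge_sum e2 S2 S2'.
pose O := fun s => OA s + OB s.
have Om : forall s, O s <= O s.+1 by move=> s; rewrite /O /=; lia.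
have I1 : O (blk b) <= h a + h b < O (blk b).+1.
  by rewrite E1 /O /=; have := cval_lt V1; lia.
have I2 : O (blk b') <= h a + h b < O (blk b').+1.
  by rewrite E E2 /O /=; have := cval_lt V2; lia.
have Bb : blk b = blk b' := interval_uniq Om I1 I2.
move: E; rewrite E1 E2 -Bb => /addnI Ec.
rewrite -Bb in V2.
have KK := cval_inj V1 V2 Ec; subst K'.
have Ba : blk a = blk a' by rewrite B1 B2 Bb.
have : (vcode a, vcode b) = (vcode a', vcode b') by rewrite C1 C2.
by case=> Ca Cb; split; apply: vcode_inj.
Qed.

Lemma sA_par x : 0 < level x -> sA (par x) = ~~ sA x.
Proof.
move=> lx; have [L Lo] := Hpar x lx; rewrite /sA L Lo.
by case: (level x) lx => // n _; rewrite addSn /= negbK.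
Qed.

Lemma edge_bip x y : e x y -> sA x != sA y.
Proof.
move=> exy; move: (exy) => /He [[i hi E]|[lx px]|[ly py]].
- have hi0 : i < r by lia.
  have Ha : x = v i \/ x = v i.+1 by apply/set2P; rewrite -E set21.
  have Hb : y = v i \/ y = v i.+1 by apply/set2P; rewrite -E set22.
  have [S1 _ _] := vsp hi0; have [S2 _ _] := vsp hi.
  case: Ha => Ea; case: Hb => Eb; subst x y; rewrite ?Hirr // in exy;
   rewrite S1 S2 /=; by case: (odd i).
- by rewrite -px sA_par //; case: (sA x).
- by rewrite -py sA_par //; case: (sA y).
Qed.

Lemma orient x y : e x y -> exists a b, [/\ e a b, sA a, ~~ sA b & ((x = a /\ y = b) \/ (x = b /\ y = a))].
Proof.
move=> exy; have B := edge_bip exy.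
case Sx: (sA x).
- exists x, y; split; by [ | left | move: B; rewrite Sx; case: (sA y)].
- exists y, x; split; by [rewrite Hsym | rewrite Sx | right | move: B; rewrite Sx; case: (sA y)].
Qed.

Definition gE (E : {set V}) := \sum_(z in E) h z.
Lemma gE_pair x y : x != y -> gE [set x; y] = h x + h y.
Proof. by move=> ne; rewrite /gE big_setU1 ?big_set1 // inE. Qed.

Lemma edge_rep E : E \in edges e -> exists a b, [/\ e a b, sA a, ~~ sA b & E = [set a; b]].
Proof.
case/imsetP => p; rewrite inE => ep ->.
have [a [b [eab Sa Sb [[-> ->]|[-> ->]]]]] := orient ep; exists a, b; split=> //.
by rewrite setUC.
Qed.

Lemma NA_pos : 0 < NA.
Proof.
have hR : 0 < R by rewrite /R; lia.
rewrite /NA; apply: leq_trans (OA_le hR); rewrite /= /al; lia.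
Qed.
Lemma NB_pos : 0 < NB.
Proof.
have hR : 0 < R by rewrite /R; lia.
rewrite /NB; apply: leq_trans (OB_le hR); rewrite /= /be; lia.
Qed.

Definition M := NA + NB - 1.

Lemma nedges_le : nedges e <= M.
Proof.
have gl : forall E, E \in edges e -> gE E < M.
  move=> E /edge_rep [a [b [eab Sa Sb ->]]].
  have ne : a != b by apply/negP => /eqP ab; move: Sb; rewrite -ab Sa.
  rewrite gE_pair // /M; have := h_lt a; have := h_lt b; rewrite Sa (negbTE Sb); lia.
have U : uniq (map gE (enum (edges e))).
  rewrite map_inj_in_uniq ?enum_uniq // => E E'; rewrite !mem_enum.
  move=> /edge_rep [a [b [eab Sa Sb ->]]] /edge_rep [a' [b' [eab' Sa' Sb' ->]]].
  have ne : a != b by apply/negP => /eqP ab; move: Sb; rewrite -ab Sa.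
  have ne' : a' != b' by apply/negP => /eqP ab; move: Sb'; rewrite -ab Sa'.
  rewrite !gE_pair // => Es.
  by have [-> ->] := edge_inj eab Sa Sb eab' Sa' Sb' Es.
have Sub : {subset map gE (enum (edges e)) <= iota 0 M}.
  by move=> n /mapP [E]; rewrite mem_enum => /gl ? ->; rewrite mem_iota.
by have := uniq_leq_size U Sub; rewrite size_map size_iota -cardE.
Qed.

Definition parent x := if 0 < level x then par x else v (lobe x).-1.
Definition rank x := 3 * lobe x + level x.

Lemma lev0 x : level x = 0 -> x = v (lobe x).
Proof. by case: (Hx x) => _ _; apply. Qed.

Lemma parent_rank x : x != v 0 -> rank (parent x) < rank x.
Proof.
move=> nx; rewrite /parent /rank; case: (posnP (level x)) => L.
- have xv := lev0 L.
  have j0 : 0 < lobe x by case: (posnP (lobe x)) => // j0; move: nx; rewrite xv j0 eqxx.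
  have hj : (lobe x).-1 < r by have [hl _ _] := Hx x; lia.
  have [Lo Le] := Hv _ hj; rewrite L /= Lo Le; lia.
- have [Le Lo] := Hpar x L; rewrite /= Le Lo; lia.
Qed.

Lemma parent_edge x : x != v 0 -> e x (parent x).
Proof.
move=> nx; rewrite /parent; case: (posnP (level x)) => L /=.
- have xv := lev0 L.
  have j0 : 0 < lobe x by case: (posnP (lobe x)) => // j0; move: nx; rewrite xv j0 eqxx.
  apply/He; apply: Or31; exists (lobe x).-1; first by have [hl _ _] := Hx x; lia.
  by rewrite prednK // -xv setUC.
- by apply/He; apply: Or32.
Qed.

Lemma nedges_ge : #|V|.-1 <= nedges e.
Proof.
pose pe x := [set x; parent x].
have inj : {in [set~ v 0] &, injective pe}.
  move=> x y; rewrite !inE => nx ny E.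
  apply/eqP; apply/negP => /negP nxy.
  have : x \in pe y by rewrite -E set21.
  rewrite /pe => /set2P [xy|xp]; first by rewrite xy eqxx in nxy.
  have : y \in pe x by rewrite E set21.
  rewrite /pe => /set2P [yx|yp]; first by rewrite yx eqxx in nxy.
  have := parent_rank nx; have := parent_rank ny; rewrite -xp -yp; lia.
rewrite -(cardsC1 (v 0)) -(card_in_imset inj) /nedges; apply: subset_leq_card.
apply/subsetP => E /imsetP [x]; rewrite !inE => nx ->.
rewrite /edges; apply/imsetP; exists (x, parent x); [rewrite inE /=; exact: parent_edge | by []].
Qed.

Definition fl x := if sA x then h x else M - h x.

Lemma fl_surj n : n <= M -> exists x, fl x = n.
Proof.
move=> hn; have := NA_pos; have := NB_pos => nb na.
case: (ltnP n NA) => h1.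
- have [x [Sx Ex]] := h_surj (b:=true) h1; exists x; by rewrite /fl Sx.
- have h2 : M - n < NB by rewrite /M; lia.
  have [x [Sx Ex]] := h_surj (b:=false) h2; exists x; rewrite /fl Sx Ex; lia.
Qed.

Lemma main_alpha : has_complete_alpha_labeling e.
Proof.
have na := NA_pos; have nb := NB_pos.
have cV : M.+1 <= #|V|.
  have Sub : {subset iota 0 M.+1 <= map fl (enum V)}.
    move=> n; rewrite mem_iota add0n ltnS => /fl_surj [x <-].
    by apply: map_f; rewrite mem_enum.
  by have := uniq_leq_size (iota_uniq 0 M.+1) Sub; rewrite size_iota size_map -cardE.
have EM : nedges e = M.
  by apply/eqP; rewrite eqn_leq nedges_le /=; apply: leq_trans nedges_ge; lia.
have hA : forall x, sA x -> h x < NA by move=> x Sx; have := h_lt x; rewrite Sx.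
have hB : forall x, ~~ sA x -> h x < NB by move=> x Sx; have := h_lt x; rewrite (negbTE Sx).
exists fl, NA.-1; split; last by rewrite EM; exact: fl_surj.
split; [|split; [|split]].
- move=> x y; rewrite /fl.
  case Sx: (sA x); case Sy: (sA y) => E.
  + by apply: h_inj; rewrite ?Sx ?Sy.
  + move: E; have := hA x Sx; have := hB y (negbT Sy); rewrite /M; lia.
  + move: E; have := hB x (negbT Sx); have := hA y Sy; rewrite /M; lia.
  + apply: h_inj; rewrite ?Sx ?Sy //.
    move: E; have := hB x (negbT Sx); have := hB y (negbT Sy); rewrite /M; lia.
- move=> x; rewrite EM /fl; case Sx: (sA x); last by lia.
  have := hA x Sx; rewrite /M; lia.
- move=> x y x' y' exy exy'.
  have [a [b [eab Sa Sb Hab]]] := orient exy.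
  have [a' [b' [eab' Sa' Sb' Hab']]] := orient exy'.
  have fa := hA a Sa; have fb := hB b Sb; have fa' := hA a' Sa'; have fb' := hB b' Sb'.
  have Ad : absdiff (fl x) (fl y) = M - h b - h a.
    by rewrite /absdiff /fl; case: Hab => [[-> ->]|[-> ->]]; rewrite Sa (negbTE Sb) /M; lia.
  have Ad' : absdiff (fl x') (fl y') = M - h b' - h a'.
    by rewrite /absdiff /fl; case: Hab' => [[-> ->]|[-> ->]]; rewrite Sa' (negbTE Sb') /M; lia.
  rewrite Ad Ad' => E.
  have Es : h a + h b = h a' + h b' by move: E; rewrite /M; lia.
  have [Ea Eb] := edge_inj eab Sa Sb eab' Sa' Sb' Es; subst a' b'.
  by case: Hab => [[-> ->]|[-> ->]]; case: Hab' => [[-> ->]|[-> ->]]; rewrite // setUC.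
- move=> x y exy; have [a [b [eab Sa Sb Hab]]] := orient exy.
  have fa := hA a Sa; have fb := hB b Sb.
  rewrite /fl; case: Hab => [[-> ->]|[-> ->]]; rewrite Sa (negbTE Sb); [left|right]; rewrite /M; lia.
Qed.

End Lob.

Theorem corollary4p14 (V : finType) (e : rel V) :
  pairwise_trivially_balanced_lobster e -> has_complete_alpha_labeling e.
Proof.
case=> [[Hsym Hirr] [r [v [lobe [level [par [[Hr [Hvinj Hv Hx Hpar He]] [Hev Hbal]]]]]]]].
exact: (@main_alpha V e r v lobe level par Hr Hv Hx Hpar He Hsym Hirr Hev Hbal).
Qed.
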